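(* Let $G$ be a graph containing a subgraph $F$ isomorphic to $F_4$, with vertices labelled $u_0,u_1,u_2,u_3$ as described in the context and $U=\{u_1,u_2,u_3\}$, and let $T$ be a triangle of $G$ vertex-disjoint from $F$. If $d(u_{3},T)\geq 2$, or if $e(U,V(T))\geq 6$ and $d(u_{3},T)>0$, then $G[V(T)\cup V(F)]$ contains a triangle and a quadrilateral that are vertex-disjoint.
   Context: All graphs are finite, simple and undirected. $F_4$ denotes the graph with $4$ vertices and $4$ edges not containing a $4$-cycle, i.e. a claw (star $K_{1,3}$) with one additional edge joining two of its leaves (a triangle with a pendant edge). In a copy of $F_4$, $u_0$ denotes its unique vertex of degree $3$ in $F_4$, $u_1,u_2$ its two vertices of degree $2$ in $F_4$, and $u_3$ its unique vertex of degree $1$ in $F_4$ (so $F_4$ has edges $u_0u_1,u_0u_2,u_1u_2,u_0u_3$). For a vertex $v$ and subgraph $H$, $d(v,H)$ is the number of neighbours of $v$ in $G$ lying in $V(H)$; for disjoint vertex sets $L,M$, $e(L,M)$ is the number of edges of $G$ between $L$ and $M$. $G[W]$ is the subgraph induced by $W$. *)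

(* Defs.v *)
From mathcomp Require Import all_boot.
Set Implicit Arguments. Unset Strict Implicit. Unset Printing Implicit Defensive.

Definition simple_graph (V : finType) (g : rel V) : Prop :=
  symmetric g /\ irreflexive g.

Definition is_triangle (V : finType) (g : rel V) (a b c : V) : Prop :=
  [/\ g a b, g b c & g a c].

Definition is_quad (V : finType) (g : rel V) (p q r s : V) : Prop :=
  uniq [:: p; q; r; s] /\ [/\ g p q, g q r, g r s & g s p].

Definition is_F4 (V : finType) (g : rel V) (u0 u1 u2 u3 : V) : Prop :=
  uniq [:: u0; u1; u2; u3] /\ [/\ g u0 u1, g u0 u2, g u1 u2 & g u0 u3].

Definition deg_in (V : finType) (g : rel V) (v : V) (S : {set V}) : nat :=
  #|[set x in S | g v x]|.

Definition e_between (V : finType) (g : rel V) (L M : {set V}) : nat :=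
  #|[set xy in setX L M | g xy.1 xy.2]|.

Definition has_disjoint_tri_quad (V : finType) (g : rel V) (W : {set V}) : Prop :=
  exists a b c p q r s : V,
    [/\ is_triangle g a b c, is_quad g p q r s,
        {subset [:: a; b; c; p; q; r; s] <= W}
      & uniq [:: a; b; c; p; q; r; s]].

(* Main.v *)
Require Import Defs.
From mathcomp Require Import all_boot.
From mathcomp Require Import zify.

Ltac edge Hs := first [ assumption | rewrite Hs; assumption ].
Ltac neq := first [ assumption | rewrite eq_sym; assumption ].

Ltac tryw W a b c p q r s Hs :=
  apply: (W a b c p q r s);
  [ split; edge Hs
  | split; [ rewrite /= !inE !negb_or; repeat (apply/andP; split); neq | split; edge Hs ]
  | apply/allP; rewrite /= !inE !eqxx ?orbT //
  | rewrite /= !inE !negb_or; repeat (apply/andP; split); neq ].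
Ltac one W g u0 u1 u2 u3 a b c Hs :=
  case F11: (g u1 a); case F12: (g u1 b); case F13: (g u1 c);
  case F21: (g u2 a); case F22: (g u2 b); case F23: (g u2 c); rewrite /=;
  first [ by case=> [|[]]
        | move=> _; tryw W u2 b c u0 u3 a u1 Hs
        | move=> _; tryw W u1 b c u0 u3 a u2 Hs ].
Theorem lemma8 (V : finType) (g : rel V) (u0 u1 u2 u3 t1 t2 t3 : V) :
  simple_graph g ->
  is_F4 g u0 u1 u2 u3 ->
  is_triangle g t1 t2 t3 ->
  uniq [:: u0; u1; u2; u3; t1; t2; t3] ->
  let VT := [set t1; t2; t3] in
  let U := [set u1; u2; u3] in
  (2 <= deg_in g u3 VT \/ (6 <= e_between g U VT /\ 0 < deg_in g u3 VT)) ->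
  has_disjoint_tri_quad g (VT :|: [set u0; u1; u2; u3]).
Proof.
move=> [Hs Hi] [Hu [e01 e02 e12 e03]] [f12 f23 f13] Huq VT U H.
have hd : deg_in g u3 VT <= g u3 t1 + g u3 t2 + g u3 t3.
  rewrite /deg_in.
  apply: leq_trans (_ : #|[seq x <- [:: t1; t2; t3] | g u3 x]| <= _).
    apply: subset_leq_card; apply/subsetP => x.
    move=> /[!inE] /andP[/orP[/orP[]|]/eqP-> gx]; by rewrite mem_filter /= gx /= !inE eqxx ?orbT.
  apply: leq_trans (card_size _) _.
  by rewrite /=; case: (g u3 t1); case: (g u3 t2); case: (g u3 t3).
have he : e_between g U VT <= g u1 t1 + g u1 t2 + g u1 t3 + g u2 t1 + g u2 t2 + g u2 t3
                              + (g u3 t1 + g u3 t2 + g u3 t3).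
  rewrite /e_between.
  apply: leq_trans (_ : #|[seq xy <- [:: (u1,t1); (u1,t2); (u1,t3); (u2,t1); (u2,t2); (u2,t3);
                                         (u3,t1); (u3,t2); (u3,t3)] | g xy.1 xy.2]| <= _).
    apply: subset_leq_card; apply/subsetP => -[x y].
    move=> /[!inE] /andP[/andP[Hx Hy] gx]; rewrite mem_filter; move: gx Hx Hy => /= gx.
    rewrite gx /=.
    move=> /orP[/orP[]|]/eqP-> /orP[/orP[]|]/eqP->; by rewrite !inE eqxx ?orbT.
  apply: leq_trans (card_size _) _.
  by rewrite size_filter /= addn0 !addnA.
have {H hd he} : 2 <= g u3 t1 + g u3 t2 + g u3 t3 \/
   (6 <= g u1 t1 + g u1 t2 + g u1 t3 + g u2 t1 + g u2 t2 + g u2 t3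
                              + (g u3 t1 + g u3 t2 + g u3 t3) /\ 0 < g u3 t1 + g u3 t2 + g u3 t3).
  case: H => [H|[H1 H2]]; [left; exact: leq_trans H hd|right; split].
    exact: leq_trans H1 he.
  exact: leq_trans H2 hd.
move: Huq; rewrite /= !inE !negb_or -!andbA.
move=> Hq; repeat (case/andP: Hq => ? Hq).
have W : forall a b c p q r s, is_triangle g a b c -> is_quad g p q r s ->
   {subset [:: a; b; c; p; q; r; s] <= [set t1; t2; t3] :|: [set u0; u1; u2; u3]} ->
   uniq [:: a; b; c; p; q; r; s] -> has_disjoint_tri_quad g (VT :|: [set u0; u1; u2; u3]).
  move=> a b c p q r s ? ? ? ?; by exists a, b, c, p, q, r, s.
case E1: (g u3 t1); case E2: (g u3 t2); case E3: (g u3 t3).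
- move=> _; tryw W u0 u1 u2 u3 t1 t3 t2 Hs.
- move=> _; tryw W u0 u1 u2 u3 t1 t3 t2 Hs.
- move=> _; tryw W u0 u1 u2 u3 t1 t2 t3 Hs.
- one W g u0 u1 u2 u3 t1 t2 t3 Hs.
- move=> _; tryw W u0 u1 u2 u3 t2 t1 t3 Hs.
- one W g u0 u1 u2 u3 t2 t1 t3 Hs.
- one W g u0 u1 u2 u3 t3 t1 t2 Hs.
- by rewrite /=; case=> [|[]].
Qed.
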